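(* For every $n\ge1$, the transitive tournament $I_n$ has exactly $F_n$ matching orderings, where $F_0=F_1=1$ and $F_i=F_{i-1}+F_{i-2}$ for $i\ge2$.
   Context: A tournament is a finite, non-null, loopless directed graph in which for any two distinct vertices $u,v$ there is exactly one edge with both ends in $\{u,v\}$; write $u\to v$ for the edge from $u$ to $v$. $I_n$ is the transitive tournament on $n$ vertices, i.e. vertices $v_1,\dots,v_n$ with $v_i\to v_j$ whenever $i<j$. Given an ordering of the vertices, a backedge is an edge from a later vertex to an earlier one; the ordering is a matching ordering if every vertex is the head or tail of at most one backedge. *)

(* Defs.v *)
From mathcomp Require Import all_boot all_fingroup.
Set Implicit Arguments. Unset Strict Implicit. Unset Printing Implicit Defensive.

Definition is_tournament (T : finType) (E : rel T) : Prop :=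
  (forall u, ~~ E u u) /\ (forall u v, u != v -> E u v (+) E v u).

Definition transitive_tournament (n : nat) : rel 'I_n := fun i j => (i < j)%N.
Arguments transitive_tournament n : clear implicits.

(* An ordering of the vertices of a graph on 'I_n is a permutation sigma,
   where sigma k is the vertex placed at position k; the position of vertex v
   is thus sigma^-1 v. *)
Definition position (n : nat) (sigma : 'S_n) (v : 'I_n) : 'I_n := (sigma^-1)%g v.

Definition backedge (n : nat) (E : rel 'I_n) (sigma : 'S_n) (u v : 'I_n) : bool :=
  E u v && (position sigma v < position sigma u)%N.

Definition matching_ordering (n : nat) (E : rel 'I_n) (sigma : 'S_n) : bool :=
  [forall v : 'I_n,
     #|[set e : 'I_n * 'I_n | backedge E sigma e.1 e.2 && ((e.1 == v) || (e.2 == v))]|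
       <= 1]%N.

Fixpoint fib (n : nat) : nat :=
  match n with
  | 0 => 1
  | S m => match m with 0 => 1 | S k => fib m + fib k end
  end.

(* Main.v *)
Require Import Defs.
From mathcomp Require Import all_boot all_fingroup.
From mathcomp Require Import zify.

Definition good (b : seq bool) := forall k, nth false b k -> (k.+1 < size b) && ~~ nth false b k.+1.

Fixpoint gs (n : nat) : seq (seq bool) :=
  match n with
  | 0 => [:: [::]]
  | S k => match k with
           | 0 => [:: [:: false]]
           | S j => map (fun s => rcons s false) (gs k) ++ map (fun s => s ++ [:: true; false]) (gs j)
           end
  end.

Lemma size_gs n : size (gs n) = fib n /\ size (gs n.+1) = fib n.+1.
Proof.
elim: n => [|n [IH1 IH2]] //; split => //.
rewrite /= size_cat !size_map IH1 IH2; case: n {IH1 IH2} => //=.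
Qed.

Lemma gs_good n b : b \in gs n -> size b = n /\ good b.
Proof.
elim: n {-2}n (leqnn n) b => [|N IH] n Hn b.
  case: n Hn => // _; rewrite inE => /eqP -> ; split => // k; by rewrite /= ?nth_nil.
case: n Hn => [|[|n]] Hn.
- rewrite inE => /eqP ->; split => // k; by rewrite /= ?nth_nil.
- rewrite inE => /eqP ->; split => //; case=> [|k] //=; by rewrite ?nth_nil.
rewrite /= mem_cat => /orP [/mapP [s Hs ->] | /mapP [s Hs ->]].
  have [Hsz Hg] := IH n.+1 ltac:(lia) s Hs.
  rewrite size_rcons Hsz; split => // k; rewrite !nth_rcons Hsz.
  case: (ltnP k n.+1) => Hk.
    move=> Hk'; have := Hg k Hk'; rewrite Hsz => /andP [H1 H2].
    rewrite size_rcons Hsz H1 H2 andbT; lia.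
  by case: (k == n.+1).
have [Hsz Hg] := IH n ltac:(lia) s Hs.
rewrite size_cat Hsz /=; split; first by lia.
move=> k; rewrite size_cat Hsz /= !nth_cat Hsz.
case: (ltnP k n) => Hk.
  move=> Hk'; have := Hg k Hk'; rewrite Hsz => /andP [H1 H2].
  rewrite H1 H2 /= andbT; lia.
case: (ltnP k.+1 n) => Hk2; first by lia.
case E: (k - n) => [|[|j]] /=.
- have -> : k.+1 - n = 1 by lia. move=> _; rewrite andbT; lia.
- by [].
- by rewrite nth_nil.
Qed.

Lemma good_gs n b : size b = n -> good b -> b \in gs n.
Proof.
elim: n {-2}n (leqnn n) b => [|N IH] n Hn b.
  case: n Hn => // _; move/size0nil => -> _; by rewrite inE.
case: n Hn => [|[|n]] Hn.
- move/size0nil => -> _; by rewrite inE.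
- case: b => [|x [|y b]] //= _ Hg; have := Hg 0; case: x {Hg} => //=.
  by move=> /(_ isT).
move=> Hsz Hg.
have Hlast : nth false b n.+1 = false.
  apply/negP => H; have := Hg _ H; rewrite Hsz; lia.
case/lastP: b Hsz Hg Hlast => [|s x] //; rewrite size_rcons => -[Hsz] Hg.
rewrite nth_rcons Hsz ltnn eqxx => Hx; subst x.
rewrite /= mem_cat.
case Hsn: (nth false s n).
- apply/orP; right.
  case/lastP: s Hsz Hg Hsn => [|t y] //; rewrite size_rcons => -[Hsz] Hg.
  rewrite nth_rcons Hsz ltnn eqxx => Hy; subst y.
  apply/mapP; exists t; last by rewrite -!cats1 -catA.
  apply: IH; [lia|by []|].
  move=> k Hk.
  have Hkn : k < n by move: Hk; apply: contraTT; rewrite -leqNgt -Hsz => /(nth_default false) ->.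
  have := Hg k; rewrite !nth_rcons !size_rcons Hsz Hkn.
  have -> : k < n.+1 by lia.
  move=> /(_ Hk) /andP [_ H].
  case: (ltngtP k.+1 n) => Hk2.
  - have h : k.+1 < n.+1 by lia.
    by rewrite h Hk2 /= in H; rewrite H.
  - lia.
  - by rewrite Hk2 ltnSn ltnn eqxx in H.
- apply/orP; left; apply/mapP; exists s => //.
  apply: (IH n.+1); [lia|by []|].
  move=> k Hk.
  have Hkn : k < n.+1 by move: Hk; apply: contraTT; rewrite -leqNgt -Hsz => /(nth_default false) ->.
  have := Hg k; rewrite !nth_rcons !size_rcons Hsz Hkn => /(_ Hk) /andP [_ H].
  case: (ltnP k.+1 n.+1) => Hk2 /=.
  + by rewrite Hk2 in H; rewrite H.
  + move: Hk; have -> : k = n by lia. by rewrite Hsn.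
Qed.

Lemma uniq_gs n : uniq (gs n) /\ uniq (gs n.+1).
Proof.
elim: n => [|n [IH1 IH2]] //; split => //.
rewrite /= cat_uniq !map_inj_uniq //.
- rewrite IH1 IH2 /= andbT; apply/hasPn => b /mapP [t Ht ->].
  apply/mapP => -[s Hs E].
  have [Hsz Hg] := @gs_good n.+1 s Hs.
  have [Htsz _] := @gs_good n t Ht.
  have : nth false (rcons s false) n = true by rewrite -E nth_cat Htsz ltnn subnn.
  rewrite nth_rcons Hsz ltnSn => /Hg; rewrite Hsz; lia.
- move=> x y; rewrite -(cat_rcons true x) -(cat_rcons true y) !cats1.
  by move=> /rcons_inj [] /rcons_inj [].
- by move=> x y /rcons_inj [].
Qed.

Definition g (b : seq bool) (i : nat) : nat :=
  if nth false b i then i.+1 else if (0 < i) && nth false b i.-1 then i.-1 else i.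

Lemma g_lt b i : good b -> i < size b -> g b i < size b.
Proof.
move=> Hg Hi; rewrite /g; case: ifP => [H|_]; first by case/andP: (Hg _ H).
case: ifP => _; lia.
Qed.

Lemma gK b i : good b -> i < size b -> g b (g b i) = i.
Proof.
move=> Hg Hi; rewrite /g.
case Hk: (nth false b i).
  have /andP [_ H2] := Hg _ Hk.
  by rewrite (negbTE H2) /= Hk.
case H: ((0 < i) && nth false b i.-1).
  case/andP: H => H0 H1; rewrite H1.
  lia.
by rewrite Hk H.
Qed.

Lemma g_inv b a c : a < c -> g b c < g b a -> c = a.+1 /\ nth false b a.
Proof.
rewrite /g; case: ((0 < c) && nth false b c.-1); case: ((0 < a) && nth false b a.-1);
  case: (nth false b a); case: (nth false b c); move=> H1 H2; first [exfalso; lia | split; [lia|done]].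
Qed.

Lemma nth_g b k : nth false b k = (g b k == k.+1).
Proof.
rewrite /g; case: (nth false b k); first by rewrite eqxx.
case: ((0 < k) && nth false b k.-1); apply/esym/eqP; lia.
Qed.

Section S.
Variable m : nat.
Local Notation n := m.+1.

Lemma card_lt a : a <= n -> #|[set j : 'I_n | j < a]| = a.
Proof.
move=> Ha.
have -> : [set j : 'I_n | j < a] = (widen_ord Ha) @: [set: 'I_a].
  apply/setP => j; rewrite inE; apply/idP/imsetP.
  - move=> Hj; by exists (Ordinal Hj) => //; apply: val_inj.
  - by case=> k _ ->; rewrite /= ltn_ord.
rewrite (card_imset _ (_ : injective (widen_ord Ha))) ?cardsT ?card_ord //.
by move=> x y /(congr1 val) /= /val_inj.
Qed.

Lemma card_ge a : a <= n -> #|[set j : 'I_n | a <= j]| = n - a.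
Proof.
move=> Ha.
have -> : [set j : 'I_n | a <= j] = ~: [set j : 'I_n | j < a] by apply/setP => j; rewrite !inE -leqNgt.
have := cardsC [set j : 'I_n | j < a]; rewrite card_lt // card_ord; lia.
Qed.

Lemma img_le (p : 'S_n) (A B : {set 'I_n}) : (forall j, j \in A -> p j \in B) -> #|A| <= #|B|.
Proof.
move=> H; rewrite -(card_imset A (@perm_inj _ p)); apply: subset_leq_card.
by apply/subsetP => x /imsetP [j Hj ->]; auto.
Qed.

Lemma two_in {T : finType} (A : {set T}) x y : x \in A -> y \in A -> x != y -> 1 < #|A|.
Proof.
move=> Hx Hy Hxy; have := subset_leq_card (_ : [set x; y] \subset A).
rewrite cards2 Hxy; apply.
by apply/subsetP => z; rewrite !inE => /orP [] /eqP ->.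
Qed.

Definition Sv (sigma : 'S_n) v := [set e : 'I_n * 'I_n | backedge (transitive_tournament n) sigma e.1 e.2 && ((e.1 == v) || (e.2 == v))].

Lemma inS sigma (a c v : 'I_n) : ((a,c) \in Sv sigma v) = [&& a < c, (sigma^-1)%g c < (sigma^-1)%g a & (a == v) || (c == v)].
Proof. by rewrite inE /backedge /transitive_tournament /position andbA. Qed.

Section Fwd.
Variable sigma : 'S_n.
Hypothesis HM : forall v, #|Sv sigma v| <= 1.
Local Notation p := (sigma^-1)%g.

Lemma noTwo v x y : x \in Sv sigma v -> y \in Sv sigma v -> x != y -> False.
Proof. by move=> Hx Hy Hxy; have := HM v; rewrite leqNgt (@two_in _ _ x y Hx Hy Hxy). Qed.

Lemma pne (i j : 'I_n) : nat_of_ord i != nat_of_ord j -> nat_of_ord (p i) != nat_of_ord (p j).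
Proof. by apply: contra => /eqP /val_inj /perm_inj ->. Qed.

Lemma adj (a c : 'I_n) : a < c -> p c < p a -> nat_of_ord c = a.+1.
Proof.
move=> Hac Hp; apply/eqP; rewrite eqn_leq Hac andbT leqNgt; apply/negP => Hc.
have Hk : a.+1 < n by have := ltn_ord c; lia.
pose k := Ordinal Hk.
have Hka : nat_of_ord (p k) != nat_of_ord (p a) by apply: pne; rewrite /=; lia.
case: (ltngtP (p k) (p a)) => H.
- apply: (@noTwo a (a, k) (a, c)).
  + by rewrite inS eqxx H orTb andbT /= ltnSn.
  + by rewrite inS eqxx Hac Hp.
  + apply/negP => /eqP [] /(congr1 val) /=; lia.
- apply: (@noTwo c (k, c) (a, c)).
  + rewrite inS eqxx orbT (ltn_trans Hp H) andbT /=; lia.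
  + by rewrite inS eqxx orbT Hac Hp.
  + apply/negP => /eqP [] /(congr1 val) /=; lia.
- by rewrite H eqxx in Hka.
Qed.

Lemma lowb (i : 'I_n) : i <= (p i).+1.
Proof.
have : #|[set j : 'I_n | j < i.-1]| <= #|[set k : 'I_n | k < p i]|.
  apply: (@img_le p) => j; rewrite !inE => Hj.
  have Hji : nat_of_ord (p j) != nat_of_ord (p i) by apply: pne; lia.
  rewrite ltnNge; apply/negP => H.
  have H2 : p i < p j by rewrite ltn_neqAle eq_sym Hji H.
  have Hlt : j < i by lia.
  have := @adj _ _ Hlt H2; lia.
move: (ltn_ord i) (ltn_ord (p i)) => Hi00 Hpi00.
rewrite !card_lt; lia.
Qed.

Lemma upb (i : 'I_n) : p i <= i.+1.
Proof.
case: (leqP i.+2 n) => Hin; last by have := ltn_ord (p i); lia.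
have : #|[set j : 'I_n | i.+2 <= j]| <= #|[set k : 'I_n | (p i).+1 <= k]|.
  apply: (@img_le p) => j; rewrite !inE => Hj.
  have Hji : nat_of_ord (p j) != nat_of_ord (p i) by apply: pne; lia.
  rewrite leqNgt; apply/negP => H.
  have H2 : p j < p i by rewrite ltn_neqAle Hji.
  have Hlt : i < j by lia.
  have := @adj _ _ Hlt H2; lia.
move: (ltn_ord i) (ltn_ord (p i)) => Hi00 Hpi00.
rewrite !card_ge; lia.
Qed.

Lemma up_swap (i : 'I_n) : nat_of_ord (p i) = i.+1 -> exists2 k : 'I_n, nat_of_ord k = i.+1 & nat_of_ord (p k) = i.
Proof.
move=> Hpi.
have Hk : i.+1 < n by rewrite -Hpi ltn_ord.
exists (Ordinal Hk) => //=.
pose k := Ordinal Hk.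
apply/eqP/negP => Hne.
have Hki : nat_of_ord (p k) != nat_of_ord (p i) by apply: pne; rewrite /=; lia.
have := lowb k; have := upb k => /= H1 H2.
have : #|[set j : 'I_n | i <= j]| <= #|[set l : 'I_n | i.+1 <= l]|.
  apply: (@img_le p) => j; rewrite !inE => Hj.
  case: (ltngtP j i.+1) => Hj1.
  - have -> : j = i by apply: val_inj => /=; lia.
    by rewrite Hpi.
  - have := lowb j; lia.
  - have -> : j = k by apply: val_inj.
    move: Hki; rewrite Hpi /= => Hki.
    move: Hne H1 H2 Hki; rewrite /k /=. lia.
move: (ltn_ord i) (ltn_ord (p i)) => Hi00 Hpi00.
rewrite !card_ge; lia.
Qed.

Lemma down_swap (i : 'I_n) : 0 < i -> nat_of_ord (p i) = i.-1 -> exists2 k : 'I_n, nat_of_ord k = i.-1 & nat_of_ord (p k) = i.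
Proof.
move=> Hi0 Hpi.
have Hk : i.-1 < n by have := ltn_ord i; lia.
exists (Ordinal Hk) => //=.
pose k := Ordinal Hk.
apply/eqP/negP => Hne.
have Hki : nat_of_ord (p k) != nat_of_ord (p i) by apply: pne; rewrite /=; lia.
have := lowb k; have := upb k => /= H1 H2.
have : #|[set j : 'I_n | j < i.+1]| <= #|[set l : 'I_n | l < i]|.
  apply: (@img_le p) => j; rewrite !inE => Hj.
  case: (ltngtP j i.-1) => Hj1.
  - have := upb j; lia.
  - have -> : j = i by apply: val_inj => /=; lia.
    by rewrite Hpi; lia.
  - have -> : j = k by apply: val_inj.
    move: Hki; rewrite Hpi /= => Hki.
    move: Hne H1 H2 Hki; rewrite /k /=. lia.
move: (ltn_ord i) (ltn_ord (p i)) => Hi00 Hpi00.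
rewrite !card_lt; lia.
Qed.

End Fwd.

Definition fb b (i : 'I_n) : 'I_n := inord (g b i).
Definition pof b : 'S_n := insubd (1%g : 'S_n) [ffun i => fb b i].

Lemma pofE b (i : 'I_n) : good b -> size b = n -> nat_of_ord (pof b i) = g b i.
Proof.
move=> Hg Hs.
have Hlt : forall j : 'I_n, g b j < n.
  move=> j; have := @g_lt b j Hg; rewrite Hs; apply; exact: ltn_ord.
have inj : injective (fb b).
  apply: (can_inj (g:=fb b)) => j; apply: val_inj.
  rewrite /fb /= (inordK (Hlt j)) inordK ?gK ?Hs //.
have Hinj : injectiveb [ffun i => fb b i].
  by apply/injectiveP; apply: eq_inj inj _ => x; rewrite ffunE.
by rewrite -pvalE /pof val_insubd Hinj ffunE /fb inordK.
Qed.

Lemma back b : b \in gs n -> forall v, #|Sv (pof b)^-1 v| <= 1.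
Proof.
move=> Hb v; have [Hs Hg] := @gs_good _ _ Hb.
pose x0 : 'I_n * 'I_n := if nth false b v then (v, inord v.+1) else (inord v.-1, v).
rewrite -(cards1 x0); apply: subset_leq_card; apply/subsetP => -[a c].
rewrite inS invgK !pofE // => /and3P [Hac Hgc Hv].
have [Hca Hba] := @g_inv b _ _ Hac Hgc.
rewrite inE /x0.
case/orP: Hv => /eqP Hv; subst.
- rewrite Hba; apply/eqP; congr pair; apply: val_inj; rewrite /= inordK //.
  by rewrite -Hca ltn_ord.
- have /andP [_ H2] := Hg _ Hba.
  rewrite Hca (negbTE H2); apply/eqP; congr pair; apply: val_inj; rewrite /= inordK //; exact: ltn_ord.
Qed.

Lemma fwd sigma : (forall v, #|Sv sigma v| <= 1) -> exists2 b, b \in gs n & sigma = ((pof b)^-1)%g.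
Proof.
move=> HM.
pose b := mkseq (fun k => nat_of_ord ((sigma^-1)%g (inord k)) == k.+1) n.
have Hsz : size b = n by rewrite size_mkseq.
have Hnth : forall i : 'I_n, nth false b i = (nat_of_ord ((sigma^-1)%g i) == i.+1).
  by move=> i; rewrite nth_mkseq // inord_val.
have Hgood : forall k, nth false b k -> (k.+1 < size b) && ~~ nth false b k.+1.
  move=> k Hk.
  have Hkn : k < n.
    by move: Hk; apply: contraTT; rewrite -leqNgt -Hsz => /(nth_default false) ->.
  have Hp : nat_of_ord ((sigma^-1)%g (Ordinal Hkn)) = k.+1 by apply/eqP; rewrite -(Hnth (Ordinal Hkn)).
  have [k' Hk' Hpk'] := @up_swap sigma HM (Ordinal Hkn) Hp.
  have Hk1 : k.+1 = k' by rewrite Hk'.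
  rewrite Hsz Hk1 ltn_ord Hnth Hpk' /=; apply/negP => /eqP; lia.
have Hpb : pof b = (sigma^-1)%g.
  apply/permP => i; apply: val_inj; rewrite /= pofE // /g Hnth.
  have L := @lowb sigma HM i; have U := @upb sigma HM i.
  case E1: (nat_of_ord ((sigma^-1)%g i) == i.+1); first by rewrite (eqP E1).
  case: (posnP i) => Hi0.
    rewrite Hi0 /=; move: E1 L U; rewrite Hi0; lia.
  have Hn1 : i.-1 < n by have := ltn_ord i; lia.
  have -> : nth false b i.-1 = (nat_of_ord ((sigma^-1)%g (Ordinal Hn1)) == i).
    by rewrite (Hnth (Ordinal Hn1)) /= prednK.
  rewrite /=.
  case E2: (nat_of_ord ((sigma^-1)%g i) == i.-1).
    have [k Hk Hpk] := @down_swap sigma HM i Hi0 (eqP E2).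
    have -> : Ordinal Hn1 = k by apply: val_inj.
    by rewrite Hpk eqxx (eqP E2).
  case E3: (_ == _).
    have E4 : (sigma^-1)%g (Ordinal Hn1) = (sigma^-1)%g i by apply: val_inj; rewrite /= (eqP E3); move: E1 E2 L U; lia.
    move/perm_inj: E4 => /(congr1 val) /=; lia.
  move: E1 E2 L U; lia.
exists b; first exact: good_gs.
by rewrite Hpb invgK.
Qed.

End S.

Theorem corollary5p7 (n : nat) : (1 <= n)%N ->
  #|[set sigma : 'S_n | matching_ordering (transitive_tournament n) sigma]| = fib n.
Proof.
case: n => [//|m] _.
pose L := map (fun b => ((pof m b)^-1)%g) (gs m.+1).
have UL : uniq L.
  rewrite map_inj_in_uniq ?(proj1 (uniq_gs _)) //.
  move=> b c Hb Hc /(congr1 (fun s => (s^-1)%g)); rewrite !invgK => E.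
  have [Hsb Hgb] := @gs_good _ _ Hb; have [Hsc Hgc] := @gs_good _ _ Hc.
  apply: (@eq_from_nth _ false); first by rewrite Hsb Hsc.
  move=> k Hk; rewrite Hsb in Hk.
  by rewrite !nth_g -(@pofE m b (Ordinal Hk) Hgb Hsb) -(@pofE m c (Ordinal Hk) Hgc Hsc) E.
have -> : #|[set sigma : 'S_m.+1 | matching_ordering (transitive_tournament m.+1) sigma]| = #|L|.
  apply: eq_card => sigma; rewrite inE; apply/idP/idP.
  - move/forallP => HM; have [b Hb ->] := @fwd m sigma HM.
    by apply/mapP; exists b.
  - by case/mapP => b Hb ->; apply/forallP => v; exact: back.
by rewrite (card_uniqP UL) size_map; exact (proj1 (size_gs _)).
Qed.
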